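(* Let $f:[0,1]\to\mathbb{R}$ with $f(0),f(1)\in\mathbb{Z}$, and let $n\in\mathbb{N}_+$, $n\ge 3$. Set \[ \phi_n(x):=(n+1)\int_0^1 t(1-t)^{n(1-x)}\frac{(1-t)^{nx}-t^{nx}}{1-2t}\,dt,\quad x\in[0,1]. \] If $f(x)-\phi_n(x)$ is monotone increasing on $[0,1]$, then $\widetilde{B}_n(f)$ is monotone increasing on $[0,1]$.
   Context: For $n\in\mathbb{N}_+$ and $f:[0,1]\to\mathbb{R}$, $\widetilde{B}_n(f)(x):=\sum_{k=0}^n \left[f\left(\frac{k}{n}\right)\binom{n}{k}\right]x^k(1-x)^{n-k}$, where $[\alpha]$ is the largest integer $\le\alpha$. Monotone increasing is meant in the non-strict sense. *)

(* Defs.v *)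
From HB Require Import structures.
From mathcomp Require Import all_boot all_order all_algebra.
From mathcomp Require Import all_classical all_reals all_analysis.
Set Implicit Arguments. Unset Strict Implicit. Unset Printing Implicit Defensive.
Import Order.TTheory GRing.Theory Num.Theory.
Local Open Scope ring_scope.
Local Open Scope classical_set_scope.

Definition floorBernstein (R : realType) (n : nat) (f : R -> R) (x : R) : R :=
  \sum_(0 <= k < n.+1)
     (Num.floor (f (k%:R / n%:R) * ('C(n, k))%:R))%:~R
       * x ^+ k * (1 - x) ^+ (n - k).

(* phi_n(x) = (n+1) * int_0^1 t (1-t)^(n(1-x)) ((1-t)^(nx) - t^(nx)) / (1-2t) dt
   (Lebesgue integral; the integrand has a removable singularity at t=1/2,
   a null set; real powers are powR). *)
Definition phi (R : realType) (n : nat) (x : R) : R :=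
  n.+1%:R *
  \int[@lebesgue_measure R]_(t in `[0%R, 1%R])
     (t * (1 - t) `^ (n%:R * (1 - x))
        * (((1 - t) `^ (n%:R * x) - t `^ (n%:R * x)) / (1 - 2 * t))).

(* Main.v *)
Require Import Defs.
From HB Require Import structures.
From mathcomp Require Import all_boot all_order all_algebra.
From mathcomp Require Import all_classical all_reals all_analysis.
From mathcomp Require Import ring lra.
Set Implicit Arguments. Unset Strict Implicit. Unset Printing Implicit Defensive.
Import Order.TTheory GRing.Theory Num.Theory.
Local Open Scope ring_scope.

Definition Bern (R : realType) n (c : nat -> R) (x : R) : R :=
  \sum_(k < n.+1) c k * ('C(n, k))%:R * x ^+ k * (1 - x) ^+ (n - k).

Lemma Bern_S (R : realType) n (c : nat -> R) x :
  Bern n.+1 c x = (1 - x) * Bern n c x + x * Bern n (fun k => c k.+1) x.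
Proof.
rewrite /Bern big_ord_recl /= [in RHS]big_ord_recl /=.
under eq_bigr => i _ do rewrite /bump /= add1n binS natrD !mulrDr mulrDl mulrDl.
rewrite big_split /= big_ord_recr /= (bin_small (ltnSn n)) mulr0 !mul0r addr0.
rewrite mulrDr !mulr_sumr !bin0 !subn0.
have -> : \sum_(i < n) c i.+1 * ('C(n, i.+1))%:R * x ^+ i.+1 * (1 - x) ^+ (n.+1 - i.+1)
   = \sum_(i < n) (1 - x) * (c (bump 0 i) * ('C(n, bump 0 i))%:R * x ^+ bump 0 i * (1 - x) ^+ (n - bump 0 i)).
  apply: eq_bigr => i _; rewrite /bump /= add1n subSS -(subnSK (ltn_ord i)).
  by rewrite !exprS; ring.
rewrite addrA; congr (_ + _ + _); first by rewrite !exprS; ring.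
by apply: eq_bigr => i _; rewrite subSS !exprS; ring.
Qed.

Lemma Bern_le (R : realType) n (c d : nat -> R) x : 0 <= x <= 1 ->
  (forall k, c k <= d k) -> Bern n c x <= Bern n d x.
Proof.
move=> /andP[x0 x1] cd; apply: ler_sum => i _.
rewrite -!mulrA ler_wpM2r // ?mulr_ge0 ?exprn_ge0 ?subr_ge0 //.
Qed.

Lemma Bern_homo (R : realType) n (c : nat -> R) :
  (forall k, c k <= c k.+1) ->
  {in `[0, 1] &, {homo Bern n c : x y / x <= y}}.
Proof.
elim: n c => [|n IH] c cS x y; rewrite !in_itv /= => /andP[x0 x1] /andP[y0 y1] xy.
  by rewrite /Bern !big_ord1.
rewrite !Bern_S.
have h1 : Bern n c x <= Bern n c y by apply: IH => //; rewrite in_itv /= ?x0 ?y0.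
have h2 : Bern n (fun k => c k.+1) x <= Bern n (fun k => c k.+1) y.
  by apply: IH => //; rewrite in_itv /= ?x0 ?y0.
have h3 : Bern n c x <= Bern n (fun k => c k.+1) x by apply: Bern_le; rewrite ?x0.
have : (1 - y) * Bern n c x + y * Bern n (fun k => c k.+1) x <=
       (1 - y) * Bern n c y + y * Bern n (fun k => c k.+1) y.
  by apply: lerD; apply: ler_wpM2l; rewrite ?subr_ge0.
apply: le_trans.
have : 0 <= (y - x) * (Bern n (fun k => c k.+1) x - Bern n c x).
  by apply: mulr_ge0; rewrite subr_ge0.
lra.
Qed.

Section PhiSec.
Variable R : realType.
Notation mu := (@lebesgue_measure R).

Definition Q n k (t : R) : R := \sum_(i < k) t ^+ i.+1 * (1 - t) ^+ (n - i.+1).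

Lemma Qid n k t : (k <= n)%N ->
  Q n k t * (1 - 2 * t) = t * (1 - t) ^+ (n - k) * ((1 - t) ^+ k - t ^+ k).
Proof.
elim: k => [|k IH] kn.
  by rewrite /Q big_ord0 mul0r !expr0 subrr mulr0.
rewrite /Q big_ord_recr /= mulrDl -/(Q n k t) IH ?(ltnW kn) //.
rewrite -(subnSK kn).
set m := (n - k.+1)%N.
rewrite !exprS; ring.
Qed.

Lemma integrandE n k t : (0 < n)%N -> (k <= n)%N -> 0 <= t <= 1 -> t != 2^-1 ->
  t * (1 - t) `^ (n%:R * (1 - k%:R / n%:R))
        * (((1 - t) `^ (n%:R * (k%:R / n%:R)) - t `^ (n%:R * (k%:R / n%:R))) / (1 - 2 * t))
  = Q n k t.
Proof.
move=> n0 kn /andP[t0 t1] th.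
have nn : (n%:R : R) != 0 by rewrite pnatr_eq0 -lt0n.
have e1 : (n%:R : R) * (k%:R / n%:R) = k%:R by rewrite mulrCA mulfV // mulr1.
have e2 : (n%:R : R) * (1 - k%:R / n%:R) = (n - k)%:R by rewrite mulrBr mulr1 e1 natrB.
rewrite e1 e2 !powR_mulrn ?subr_ge0 //.
have h : 1 - 2 * t != 0.
  by apply/eqP => h; move/eqP: th; apply; lra.
by rewrite -(mulfK h (Q n k t)) Qid // mulrA.
Qed.

Lemma Q_int n k : mu.-integrable `[0, 1] (EFin \o Q n k).
Proof.
elim: k => [|k IH].
  have := @integrable0 _ _ _ mu `[0%R, 1%R].
  move=> H; refine (eq_integrable _ _ _ _ H) => //.
  by move=> t _; rewrite /= /Q big_ord0.
have H : mu.-integrable `[0%R, 1%R] ((EFin \o Q n k) \+ (EFin \o XMonemX k.+1 (n - k.+1)))%E.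
  by apply: integrableD => //; exact: integrable_XMonemX.
 refine (eq_integrable _ _ _ _ H) => // t _.
by rewrite /= /Q big_ord_recr /= /XMonemX.
Qed.

Lemma Rint_QS n k : (k < n)%N ->
  \int[mu]_(t in `[0, 1]) Q n k.+1 t =
  \int[mu]_(t in `[0, 1]) Q n k t + (k.+1`! * (n - k.+1)`!)%:R / (n.+1`!)%:R.
Proof.
move=> kn.
have -> : \int[mu]_(t in `[0%R, 1%R]) Q n k.+1 t =
   \int[mu]_(t in `[0%R, 1%R]) (Q n k t + XMonemX k.+1 (n - k.+1) t).
  by apply: eq_Rintegral => t _; rewrite /Q big_ord_recr /= /XMonemX.
rewrite RintegralD //; [|exact: Q_int|exact: integrable_XMonemX].
congr (_ + _).
rewrite Rintegral_mkcond.
have := beta_fun_fact (R:=R) k.+1 (n - k.+1).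
rewrite /beta_fun /= => ->.
have -> : (k + (n - k.+1)).+2 = n.+1 by rewrite -[in RHS](subnKC kn) addSn.
by [].
Qed.

Lemma phiE n k : (0 < n)%N -> (k <= n)%N ->
  phi n (k%:R / n%:R) = n.+1%:R * \int[mu]_(t in `[0, 1]) Q n k t.
Proof.
move=> n0 kn; rewrite /phi; congr (_ * _); rewrite /Rintegral; congr fine.
have mD : measurable (`[0%R, 1%R] `\ (2^-1 : R)).
  by apply: measurableD => //.
have mQ0 := measurable_int _ (Q_int n k).
have mQ := measurable_funS (D := `[0%R, 1%R] `\ (2^-1 : R)) (measurable_itv _) (@subDsetl _ _ _) mQ0.
rewrite -(integral_setD1 mD); last first.
  apply: eq_measurable_fun mQ => t /set_mem [/= Dt tr].
  by rewrite /= integrandE //; apply/eqP.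
rewrite -[RHS](integral_setD1 mD) //.
apply: eq_integral => t /set_mem [/= Dt tr].
by rewrite integrandE //; apply/eqP.
Qed.

End PhiSec.

Lemma phi_step (R : realType) n k : (0 < n)%N -> (k < n)%N ->
  phi (R:=R) n (k.+1%:R / n%:R) - phi n (k%:R / n%:R) = ('C(n, k.+1))%:R^-1.
Proof.
move=> n0 kn.
rewrite !phiE // ?(ltnW kn) // Rint_QS // mulrDr addrAC subrr add0r.
rewrite [(n.+1)`!]factS natrM -(bin_fact kn) natrM.
have h1 : ('C(n, k.+1))%:R != 0 :> R by rewrite pnatr_eq0 -lt0n bin_gt0.
have h2 : (n - k.+1)`!%:R != 0 :> R by rewrite pnatr_eq0 -lt0n fact_gt0.
have h3 : (k.+1)`!%:R != 0 :> R by rewrite pnatr_eq0 -lt0n fact_gt0.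
have h4 : 1 + n%:R != 0 :> R by rewrite addrC natr1 pnatr_eq0.
by field; rewrite h1 h2 h3 h4.
Qed.

Lemma kn_in (R : realType) n k : (0 < n)%N -> (k <= n)%N ->
  (k%:R / n%:R : R) \in `[0, 1].
Proof.
move=> n0 kn; rewrite in_itv /= divr_ge0 //= ler_pdivrMr ?ltr0n // mul1r ler_nat //.
Qed.

Theorem corollary2p3 (R : realType) (f : R -> R) (n : nat) :
  f 0 \is a Num.int -> f 1 \is a Num.int -> (3 <= n)%N ->
  {in `[0, 1] &, {homo (fun x => f x - phi n x) : x y / x <= y}} ->
  {in `[0, 1] &, {homo floorBernstein n f : x y / x <= y}}.
Proof.
move=> _ _ n3 hom.
have n0 : (0 < n)%N by apply: leq_trans n3.
pose a k := Num.floor (f (k%:R / n%:R) * ('C(n, k))%:R).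
pose c k := (a (minn k n))%:~R / ('C(n, minn k n))%:R : R.
have FB x : floorBernstein n f x = Bern n c x.
  rewrite /floorBernstein /Bern big_mkord; apply: eq_bigr => i _.
  have ik : minn i n = i by apply/minn_idPl; rewrite -ltnS.
  rewrite /c ik divfK // pnatr_eq0 -lt0n bin_gt0.
  by rewrite -ltnS.
have cS k : c k <= c k.+1.
  case: (leqP n k) => kn.
    by rewrite /c !(minn_idPr _) // leqW.
  rewrite /c (minn_idPl (ltnW kn)) (minn_idPl kn).
  have C0 : 0 < ('C(n, k))%:R :> R by rewrite ltr0n bin_gt0 ltnW.
  have C1 : 0 < ('C(n, k.+1))%:R :> R by rewrite ltr0n bin_gt0.
  have h0 : (a k)%:~R <= f (k%:R / n%:R) * ('C(n, k))%:R by apply: floor_le.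
  have h1 : f (k.+1%:R / n%:R) * ('C(n, k.+1))%:R < (a k.+1 + 1)%:~R by apply: floorD1_gt.
  have hp := hom _ _ (kn_in R n0 (ltnW kn)) (kn_in R n0 kn).
  have hle : (k%:R / n%:R : R) <= k.+1%:R / n%:R.
    by rewrite ler_pM2r ?invr_gt0 ?ltr0n // ler_nat.
  have {hle}hp := hp hle; move: hp => /= hp.
  have st := phi_step R n0 kn.
  have e0 : (a k)%:~R / ('C(n, k))%:R <= f (k%:R / n%:R) by rewrite ler_pdivrMr.
  have e1 : f (k.+1%:R / n%:R) < (a k.+1 + 1)%:~R / ('C(n, k.+1))%:R by rewrite ltr_pdivlMr.
  move: e1; rewrite intrD mulrDl mul1r => e1.
  lra.
move=> x y hx hy xy; rewrite !FB.
exact: (@Bern_homo R n c cS x y hx hy xy).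
Qed.
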